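(* Let $S\subset\mathbb N$ be finite. The following are equivalent: (1) $S$ is not a caterpillar; (2) there is a subset $T\subset S$ whose split is $T=(L,R)$ with $|L|,|R|\geq 2$; (3) there is a subset $T\subset S$ whose split is $T=(L,R)$ with $|L|=|R|=2$. Consequently, every subset of a caterpillar is a caterpillar.
   Context: For $m\in\mathbb N$ let $d(m)$ be the finite set of integers with $m=\sum_{i\in d(m)}2^i$. For a finite $S\subset\mathbb N$ with $|S|\geq2$, its first splitting index is $s(S)=\max\{i:\exists x,y\in S,\ i\in d(x)\setminus d(y)\}$; with $S_0=\{x\in S:s(S)\notin d(x)\}$ and $S_1=\{x\in S:s(S)\in d(x)\}$ (both nonempty), $(S_0,S_1)$ is the split of $S$, written $S=(S_0,S_1)$. Caterpillars are defined recursively: the empty set and all singletons are caterpillars; a finite $S\subset\mathbb N$ with $|S|\geq2$ and split $(S_0,S_1)$ is a caterpillar iff one of $S_0,S_1$ is a singleton and the other is a caterpillar. *)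

(* Defs.v *)
From HB Require Import structures.
From mathcomp Require Import all_boot all_order.
From mathcomp Require Import finmap.
Set Implicit Arguments. Unset Strict Implicit. Unset Printing Implicit Defensive.
Local Open Scope fset_scope.

(* i \in d(m): the i-th binary digit of m is 1 *)
Definition bitn (m i : nat) : bool := odd (m %/ 2 ^ i).

Definition separating (S : {fset nat}) (i : nat) : Prop :=
  exists x y, [/\ x \in S, y \in S, bitn x i & ~~ bitn y i].

Definition split_index (S : {fset nat}) (i : nat) : Prop :=
  separating S i /\ forall j, separating S j -> j <= i.

Definition is_split (S L R : {fset nat}) : Prop :=
  2 <= #|` S| /\
  exists i, [/\ split_index S i,
                L = [fset x in S | ~~ bitn x i] &
                R = [fset x in S | bitn x i]].

Inductive caterpillar : {fset nat} -> Prop :=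
| cat_empty : caterpillar fset0
| cat_single x : caterpillar [fset x]
| cat_left S L R : is_split S L R -> #|` L| = 1 -> caterpillar R -> caterpillar S
| cat_right S L R : is_split S L R -> #|` R| = 1 -> caterpillar L -> caterpillar S.

(* Main.v *)
Require Import Defs.
From HB Require Import structures.
From mathcomp Require Import all_boot all_order.
From mathcomp Require Import finmap zify.
From Stdlib Require Import Classical.
Local Open Scope fset_scope.

Lemma bitnS x i : bitn x i.+1 = bitn (x %/ 2) i.
Proof. by rewrite /bitn expnS divnMA. Qed.

Lemma bit_ext_aux n x y : x + y <= n -> (forall i, bitn x i = bitn y i) -> x = y.
Proof.
elim: n x y => [|n IH] x y hxy hb; first by lia.
have h0 := hb 0; rewrite /bitn expn0 !divn1 in h0.
have e : x %/ 2 = y %/ 2.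
  apply: IH; last by move=> i; rewrite -!bitnS.
  lia.
rewrite (divn_eq x 2) (divn_eq y 2) e !modn2 h0 //.
Qed.

Lemma bit_diff x y : x != y -> exists i, bitn x i != bitn y i.
Proof.
move=> hxy; apply: NNPP => hn; move/eqP: hxy => hxy; apply: hxy.
apply: (@bit_ext_aux (x + y)) => // i.
apply/eqP; apply: NNPP => h; apply: hn; by exists i; apply/negP.
Qed.

Lemma bitn_lt x j : bitn x j -> j < x.
Proof.
rewrite /bitn => h.
have : 2 ^ j <= x.
  rewrite leqNgt; apply/negP => hl; by rewrite divn_small in h.
apply: leq_trans; exact: ltn_expl.
Qed.

Lemma max_exists (P : nat -> Prop) B :
  (exists n, P n) -> (forall n, P n -> n <= B) -> exists m, P m /\ forall n, P n -> n <= m.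
Proof.
elim: B => [|B IH] [n Pn] hB.
  exists n; split => // k Pk; have := hB _ Pk; have := hB _ Pn; lia.
case: (classic (P B.+1)) => hP; first by exists B.+1.
apply: IH; first by exists n.
move=> k Pk; have := hB _ Pk; rewrite leq_eqVlt => /orP [/eqP e|//].
by subst k.
Qed.

Lemma split_exists (S : {fset nat}) x y : x \in S -> y \in S -> x != y ->
  exists i, split_index S i.
Proof.
move=> hx hy hxy.
have [i hi] := bit_diff _ _ hxy.
apply: (@max_exists _ (\max_(z <- S) z)).
  case hb: (bitn x i) hi => /= hi.
    by exists i, x, y; rewrite hb; split => //; rewrite (negbTE hi).
  by exists i, y, x; rewrite hb; split => //; move: hi; case: bitn.
move=> j [a [b [ha _ hba _]]].
have := bitn_lt _ _ hba; have := @leq_bigmax_seq _ (enum_fset S) xpredT id a ha erefl.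
rewrite /=; lia.
Qed.

Lemma split_unique S i j : split_index S i -> split_index S j -> i = j.
Proof. move=> [hi mi] [hj mj]; apply/eqP; rewrite eqn_leq mi // mj //. Qed.

Lemma card2_fset (x y : nat) : x != y -> 2 <= #|` [fset x; y]|.
Proof. by move=> h; rewrite cardfs2 h. Qed.

Lemma sub_split S i T x y : split_index S i -> T `<=` S -> x \in T -> ~~ bitn x i ->
  y \in T -> bitn y i ->
  is_split T [fset z in T | ~~ bitn z i] [fset z in T | bitn z i].
Proof.
move=> [_ mi] hTS hx bx hy biy; split.
  apply: leq_trans (card2_fset x y _) _.
    by apply/eqP => e; subst y; rewrite biy in bx.
  apply: fsubset_leq_card; apply/fsubsetP => z; rewrite !inE => /orP [/eqP->|/eqP->] //.
exists i; split => //; split; first by exists y, x.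
move=> j [a [b [ha hb hab hba]]]; apply: mi; exists a, b; split => //;
  exact: (fsubsetP hTS).
Qed.

Lemma cat_small (T : {fset nat}) : #|` T| <= 1 -> caterpillar T.
Proof.
rewrite leq_eqVlt ltnS leqn0 => /orP [/cardfs1P [x ->]|/eqP/cardfs0_eq ->].
  exact: cat_single.
exact: cat_empty.
Qed.

Lemma two_elems (S : {fset nat}) : 2 <= #|` S| -> exists x y, [/\ x \in S, y \in S & x != y].
Proof.
move=> h.
have : S != fset0 by apply/eqP => e; move: h; rewrite e cardfs0.
case/fset0Pn => x hx.
have : S `\ x != fset0.
  apply/eqP => e; move: h; rewrite (cardfsD1 x) e cardfs0 hx //.
case/fset0Pn => y; rewrite in_fsetD1 => /andP [hyx hy].
by exists x, y; split => //; rewrite eq_sym.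
Qed.

Lemma split_sizes S L R : is_split S L R -> 1 <= #|` L| /\ 1 <= #|` R|.
Proof.
move=> [_ [i [[[x [y [hx hy bx by_]]] _] -> ->]]].
split; rewrite cardfs_gt0; apply/fset0Pn.
  by exists y; rewrite !inE hy.
by exists x; rewrite !inE hx.
Qed.

Lemma sep_eqR (T : {fset nat}) i :
  [fset z in T | ~~ bitn z i] = fset0 -> T = [fset z in T | bitn z i].
Proof.
move=> e; apply/fsetP => z; rewrite !inE.
case hz: (z \in T) => //=; case b: (bitn z i) => //.
have : z \in [fset z in T | ~~ bitn z i] by rewrite !inE hz b.
by rewrite e inE.
Qed.

Lemma sep_eqL (T : {fset nat}) i :
  [fset z in T | bitn z i] = fset0 -> T = [fset z in T | ~~ bitn z i].
Proof.
move=> e; apply/fsetP => z; rewrite !inE.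
case hz: (z \in T) => //=; case b: (bitn z i) => //.
have : z \in [fset z in T | bitn z i] by rewrite !inE hz b.
by rewrite e inE.
Qed.

Lemma sub_sep (S T : {fset nat}) (P : pred nat) : T `<=` S ->
  [fset z in T | P z] `<=` [fset z in S | P z].
Proof.
move=> hT; apply/fsubsetP => z; rewrite !inE => /andP [hz ->].
by rewrite (fsubsetP hT z hz).
Qed.

Lemma hered S : caterpillar S -> forall T, T `<=` S -> caterpillar T.
Proof.
elim => {S}.
- move=> T hT; apply: cat_small; move: (fsubset_leq_card hT); rewrite cardfs0; lia.
- move=> x T hT; apply: cat_small; move: (fsubset_leq_card hT); rewrite cardfs1; lia.
- move=> S L R [h2 [i [si -> ->]]] hL _ IH T hT.
  have hRT : caterpillar [fset z in T | bitn z i] by apply: IH; exact: sub_sep.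
  have hLT : #|` [fset z in T | ~~ bitn z i]| <= 1.
    by rewrite -hL; apply: fsubset_leq_card; exact: sub_sep.
  case: (boolP ([fset z in T | ~~ bitn z i] == fset0)) => [/eqP e|/fset0Pn [x hx]].
    by rewrite (sep_eqR _ _ e).
  case: (boolP ([fset z in T | bitn z i] == fset0)) => [/eqP e|/fset0Pn [y hy]].
    by rewrite (sep_eqL _ _ e); apply: cat_small.
  move: (hx) (hy); rewrite !inE => /andP [hxT bx] /andP [hyT byy].
  apply: (cat_left (sub_split _ _ _ _ _ si hT hxT bx hyT byy)) => //.
  apply/eqP; rewrite eqn_leq hLT cardfs_gt0; apply/fset0Pn; by exists x.
- move=> S L R [h2 [i [si -> ->]]] hR _ IH T hT.
  have hLT : caterpillar [fset z in T | ~~ bitn z i] by apply: IH; exact: sub_sep.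
  have hRT : #|` [fset z in T | bitn z i]| <= 1.
    by rewrite -hR; apply: fsubset_leq_card; exact: sub_sep.
  case: (boolP ([fset z in T | bitn z i] == fset0)) => [/eqP e|/fset0Pn [y hy]].
    by rewrite (sep_eqL _ _ e).
  case: (boolP ([fset z in T | ~~ bitn z i] == fset0)) => [/eqP e|/fset0Pn [x hx]].
    by rewrite (sep_eqR _ _ e); apply: cat_small.
  move: (hx) (hy); rewrite !inE => /andP [hxT bx] /andP [hyT byy].
  apply: (cat_right (sub_split _ _ _ _ _ si hT hxT bx hyT byy)) => //.
  apply/eqP; rewrite eqn_leq hRT cardfs_gt0; apply/fset0Pn; by exists y.
Qed.

Lemma split_eq (T L R L' R' : {fset nat}) : is_split T L R -> is_split T L' R' -> L = L' /\ R = R'.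
Proof.
move=> [_ [i [si -> ->]]] [_ [j [sj -> ->]]].
by rewrite (split_unique _ _ _ si sj).
Qed.

Lemma notcat_big (T L R : {fset nat}) : is_split T L R -> 2 <= #|` L| -> 2 <= #|` R| -> ~ caterpillar T.
Proof.
move=> hs hL hR hc; case: T / hc hs.
- by move=> [h _]; rewrite cardfs0 in h.
- by move=> x [h _]; rewrite cardfs1 in h.
- move=> T L' R' hs' h1 _ hs; have [e _] := split_eq _ _ _ _ _ hs hs'.
  by move: hL; rewrite e h1.
- move=> T L' R' hs' h1 _ hs; have [_ e] := split_eq _ _ _ _ _ hs hs'.
  by move: hR; rewrite e h1.
Qed.

Lemma card_sep (S : {fset nat}) (P : pred nat) :
  (#|` [fset z in S | P z]| + #|` [fset z in S | ~~ P z]|)%N = #|` S|.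
Proof.
rewrite -cardfsUI.
have -> : [fset z in S | P z] `|` [fset z in S | ~~ P z] = S.
  apply/fsetP => z; rewrite !inE; by case: (z \in S); case: (P z).
have -> : [fset z in S | P z] `&` [fset z in S | ~~ P z] = fset0.
  apply/fsetP => z; rewrite !inE; by case: (z \in S); case: (P z).
by rewrite cardfs0 addn0.
Qed.

Lemma reduce2 (T L R : {fset nat}) : is_split T L R -> 2 <= #|` L| -> 2 <= #|` R| ->
  exists T' L' R', [/\ T' `<=` T, is_split T' L' R', #|` L'| = 2 & #|` R'| = 2].
Proof.
move=> hs hL hR; move: (hs) => [_ [i [si eL eR]]].
have [a [b [ha hb nab]]] := two_elems _ hL.
have [c [d [hc hd ncd]]] := two_elems _ hR.
move: ha hb hc hd; rewrite eL eR !inE => /andP [ha ba] /andP [hb bb] /andP [hc bc] /andP [hd bd].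
set T' : {fset nat} := [fset a; b; c; d].
have sT : T' `<=` T.
  apply/fsubsetP => z; rewrite !inE => /orP [/orP [/orP [/eqP->|/eqP->]|/eqP->]|/eqP->] //.
have aT : a \in T' by rewrite !inE eqxx.
have cT : c \in T' by rewrite !inE eqxx !orbT.
have hs' := sub_split _ _ _ _ _ si sT aT ba cT bc.
have eL' : [fset a; b] = [fset z in T' | ~~ bitn z i] :> {fset nat}.
  apply/fsetP => z; rewrite !inE; apply/idP/idP.
    by move=> /orP [/eqP->|/eqP->]; rewrite !eqxx ?orbT ?ba ?bb.
  move=> /andP [/orP [/orP [/orP [->|->]|/eqP ez]|/eqP ez]] bz; rewrite ?orbT //.
    by rewrite ez bc in bz.
  by rewrite ez bd in bz.
have eR' : [fset c; d] = [fset z in T' | bitn z i] :> {fset nat}.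
  apply/fsetP => z; rewrite !inE; apply/idP/idP.
    by move=> /orP [/eqP->|/eqP->]; rewrite !eqxx ?orbT ?bc ?bd.
  move=> /andP [/orP [/orP [/orP [/eqP ez|/eqP ez]|->]|->]] bz; rewrite ?orbT //.
    by rewrite -ez bz in ba.
  by rewrite -ez bz in bb.
exists T', [fset a; b], [fset c; d]; split => //.
- by rewrite eL' eR'.
- by rewrite cardfs2 nab.
- by rewrite cardfs2 ncd.
Qed.

Lemma witness n (S : {fset nat}) : #|` S| <= n -> ~ caterpillar S ->
  exists T L R, [/\ T `<=` S, is_split T L R, 2 <= #|` L| & 2 <= #|` R|].
Proof.
elim: n S => [|n IH] S hn hc.
  by exfalso; apply: hc; apply: cat_small; lia.
case: (leqP #|` S| 1) => h1; first by exfalso; apply: hc; apply: cat_small.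
have [x [y [hx hy nxy]]] := two_elems _ h1.
have [i si] := split_exists _ _ _ hx hy nxy.
set L : {fset nat} := [fset z in S | ~~ bitn z i].
set R : {fset nat} := [fset z in S | bitn z i].
have hs : is_split S L R by split => //; exists i.
have [hL1 hR1] := split_sizes _ _ _ hs.
have hcard := card_sep S (fun z => bitn z i).
rewrite -/L -/R in hcard.
case: (leqP 2 #|` L|) => hL2; case: (leqP 2 #|` R|) => hR2.
- by exists S, L, R; split.
- have hR : #|` R| = 1 by lia.
  have hLc : ~ caterpillar L by move=> c; apply: hc; exact: (cat_right hs hR c).
  have [T [L' [R' [hT hs' h1' h2']]]] := IH L ltac:(lia) hLc.
  exists T, L', R'; split => //; apply: fsubset_trans hT _.
  by apply/fsubsetP => z; rewrite !inE => /andP [].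
- have hL : #|` L| = 1 by lia.
  have hRc : ~ caterpillar R by move=> c; apply: hc; exact: (cat_left hs hL c).
  have [T [L' [R' [hT hs' h1' h2']]]] := IH R ltac:(lia) hRc.
  exists T, L', R'; split => //; apply: fsubset_trans hT _.
  by apply/fsubsetP => z; rewrite !inE => /andP [].
- have hL : #|` L| = 1 by lia.
  have hRc : ~ caterpillar R by move=> c; apply: hc; exact: (cat_left hs hL c).
  have [T [L' [R' [hT hs' h1' h2']]]] := IH R ltac:(lia) hRc.
  exists T, L', R'; split => //; apply: fsubset_trans hT _.
  by apply/fsubsetP => z; rewrite !inE => /andP [].
Qed.

Theorem mainTheorem4 :
  (forall S : {fset nat},
    (~ caterpillar S <->
       exists T L R, [/\ T `<=` S, is_split T L R, 2 <= #|` L| & 2 <= #|` R|]) /\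
    ((exists T L R, [/\ T `<=` S, is_split T L R, 2 <= #|` L| & 2 <= #|` R|]) <->
       exists T L R, [/\ T `<=` S, is_split T L R, #|` L| = 2 & #|` R| = 2])) /\
  (forall S T : {fset nat}, caterpillar S -> T `<=` S -> caterpillar T).
Proof.
split; last by move=> S T hS hT; exact: (hered _ hS T hT).
move=> S; split; split.
- exact: (witness _ S (leqnn _)).
- move=> [T [L [R [hT hs h1 h2]]]] hc.
  exact: (notcat_big _ _ _ hs h1 h2 (hered _ hc _ hT)).
- move=> [T [L [R [hT hs h1 h2]]]].
  have [T' [L' [R' [hT' hs' h1' h2']]]] := reduce2 _ _ _ hs h1 h2.
  exists T', L', R'; split => //; exact: fsubset_trans hT' hT.
- move=> [T [L [R [hT hs h1 h2]]]].
  by exists T, L, R; split => //; rewrite ?h1 ?h2.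
Qed.
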